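(* Let $(G,\mathcal{P})$, $(H,\mathcal{Q})$ be group pairs with finite generating sets $S$ of $G$ and $T$ of $H$, and let $f=(f_1,f_2)\colon(G,\mathcal{P})\to(H,\mathcal{Q})$ be an $(L,C,M)$-Lipschitz map of pairs. (i) For all $\alpha,\alpha'\in\mathbb{N}$ with $\alpha'\ge L\alpha+C+M$, there is a simplicial map $f_*\colon\hat R_\alpha(G,\mathcal{P},S)\to\hat R_{\alpha'}(H,\mathcal{Q},T)$ given on vertices by $f_1\sqcup f_2$. (ii) Let $r\colon(H,\mathcal{Q})\to(G,\mathcal{P})$ be an $(L,C,M)$-Lipschitz map of pairs such that $(f,r)$ is an $(L,C,M)$-quasi-retraction of pairs. For all $\alpha,\alpha',\beta,\beta'\in\mathbb{N}$ with $\alpha'\ge L\alpha+C+M$, $\beta'\ge\alpha'$, $\beta\ge L\beta'+2C+M$, the composite $\hat R_\alpha(G,\mathcal{P},S)\xrightarrow{f_*}\hat R_{\alpha'}(H,\mathcal{Q},T)\hookrightarrow\hat R_{\beta'}(H,\mathcal{Q},T)\xrightarrow{r_*}\hat R_\beta(G,\mathcal{P},S)$ is simplicially homotopic to the inclusion $\hat R_\alpha(G,\mathcal{P},S)\hookrightarrow\hat R_\beta(G,\mathcal{P},S)$. In particular, for every $i\in\mathbb{N}$, if $(H_i(\hat R_{\alpha'}(H,\mathcal{Q},T);\mathbb{Z}))_{\alpha'\in\mathbb{N}}$ is essentially trivial, then $(H_i(\hat R_\alpha(G,\mathcal{P},S);\mathbb{Z}))_{\alpha\in\mathbb{N}}$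 is essentially trivial.
   Context: A group pair $(G,\mathcal{P})$: $G$ finitely generated, $\mathcal{P}$ a non-empty finite collection of subgroups (repetitions allowed); $G/\mathcal{P}=\coprod_{P\in\mathcal{P}}G/P$, elements viewed as cosets (subsets of $G$). $d_S$ is the word metric. $f$ is $(L,C)$-Lipschitz if $d(f(x),f(x'))\le L\,d(x,x')+C$. For $L\ge1,C\ge0,M\ge0$, an $(L,C,M)$-Lipschitz map of pairs $f=(f_1,f_2)$ is an $(L,C)$-Lipschitz $f_1\colon G\to H$ and a function $f_2\colon G/\mathcal{P}\to H/\mathcal{Q}$ with Hausdorff distance between $f_1(A)$ and $f_2(A)$ less than $M$ for all $A$. $(f,r)$ is an $(L,C,M)$-quasi-retraction of pairs if moreover $d_G(r_1f_1(g),g)\le C$ for all $g\in G$ and $r_2\circ f_2=\mathrm{id}_{G/\mathcal{P}}$ (with $r_*$ the simplicial map of part (i) for $r$). Elements of $G/\mathcal{P}$ are cone vertices. A finite $U\subseteq G\sqcup G/\mathcal{P}$ is a unicone subset of diameter $\le\alpha$ if $U\cap G$ has $d_S$-diameter $\le\alpha$ and $U$ contains at most one cone vertex $A$, in which case every $g\in U\cap G$ has $a\in A$ with $d_S(g,a)\le\alpha$. $\hat R_\alpha(G,\mathcal{P},S)$ is the simplicial complex whose simplices are these subsets; for $\beta\ge\alpha$ it is a subcomplex of $\hat R_\beta$. A directed system of groups is essentially trivial if each $H_\alpha$ maps trivially to some $H_\beta$, $\beta\ge\alpha$. *)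

(* Defs.v *)
From mathcomp Require Import all_boot all_order all_algebra.
From mathcomp Require Import boolp reals.
From Stdlib Require List.
Set Implicit Arguments. Unset Strict Implicit. Unset Printing Implicit Defensive.
Import Order.TTheory GRing.Theory Num.Theory.
Local Open Scope ring_scope.

Record group := Group {
  gcar :> Type;
  gmul : gcar -> gcar -> gcar;
  ginv : gcar -> gcar;
  gone : gcar;
  gmulA : forall x y z, gmul x (gmul y z) = gmul (gmul x y) z;
  gmul1 : forall x, gmul gone x = x;
  gmulV : forall x, gmul (ginv x) x = gone }.

Definition is_subgroup (G : group) (P : G -> Prop) : Prop :=
  [/\ P (gone G), (forall x y, P x -> P y -> P (gmul x y))
    & (forall x, P x -> P (ginv x))].

Definition wlen_le (G : group) (S : seq G) (n : nat) (g : G) : Prop :=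
  exists w : seq G, [/\ (size w <= n)%N,
    (forall s, List.In s w -> List.In s S \/ List.In (ginv s) S)
    & foldr (@gmul G) (gone G) w = g].

Definition generates (G : group) (S : seq G) : Prop :=
  forall g, exists n, wlen_le S n g.

(* word length: least n with wlen_le S n g (0 if none exists; irrelevant
   when S generates) *)
Definition wordlen (G : group) (S : seq G) (g : G) : nat :=
  match pselect (exists n, asbool (wlen_le S n g)) with
  | left h => ex_minn h
  | right _ => 0%N
  end.

Definition dS (G : group) (S : seq G) (g h : G) : nat := wordlen S (gmul (ginv g) h).

(* a non-empty finite family P_0, ..., P_n of subgroups (repetitions allowed) *)
Record gpair := GPair {
  pgrp : group;
  pn : nat;
  psub : 'I_pn.+1 -> pgrp -> Prop;
  psubP : forall i, is_subgroup (psub i) }.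

Definition lcoset (G : group) (P : G -> Prop) (g : G) : G -> Prop :=
  fun x => P (gmul (ginv g) x).

(* G/𝒫 = ⨆_i G/P_i : an index i together with a left coset of P_i *)
Definition coset_vertex (X : gpair) : Type :=
  { i : 'I_(pn X).+1 &
    { A : pgrp X -> Prop | exists g, A = lcoset (@psub X i) g } }.

Definition cset (X : gpair) (A : coset_vertex X) : pgrp X -> Prop :=
  sval (projT2 A).

Definition vert (X : gpair) : Type := (pgrp X + coset_vertex X)%type.

Section Lip.
Variable R : realType.

Definition lipschitz (G H : group) (S : seq G) (T : seq H) (L C : R)
  (f : G -> H) : Prop :=
  forall x x', (dS T (f x) (f x'))%:R <= L * (dS S x x')%:R + C.

Definition image_set (G H : group) (f : G -> H) (A : G -> Prop) : H -> Prop :=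
  fun y => exists a, A a /\ y = f a.

Definition hausdorff_lt (H : group) (T : seq H) (X Y : H -> Prop) (M : R) : Prop :=
  exists e : R, [/\ e < M,
    (forall x, X x -> exists y, Y y /\ (dS T x y)%:R <= e)
    & (forall y, Y y -> exists x, X x /\ (dS T y x)%:R <= e)].

Definition lip_pair (X Y : gpair) (S : seq (pgrp X)) (T : seq (pgrp Y))
  (L C M : R) (f1 : pgrp X -> pgrp Y) (f2 : coset_vertex X -> coset_vertex Y) : Prop :=
  [/\ 1 <= L, 0 <= C, 0 <= M, lipschitz S T L C f1
    & forall A, hausdorff_lt T (image_set f1 (cset A)) (cset (f2 A)) M].

Definition quasi_retraction (X Y : gpair) (S : seq (pgrp X)) (T : seq (pgrp Y))
  (L C M : R)
  (f1 : pgrp X -> pgrp Y) (f2 : coset_vertex X -> coset_vertex Y)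
  (r1 : pgrp Y -> pgrp X) (r2 : coset_vertex Y -> coset_vertex X) : Prop :=
  [/\ lip_pair S T L C M f1 f2, lip_pair T S L C M r1 r2,
    (forall g, (dS S (r1 (f1 g)) g)%:R <= C)
    & (forall A, r2 (f2 A) = A)].
End Lip.

(** * The complexes \hat R_alpha(G,𝒫,S); simplices are finite subsets, given by lists *)
Definition Rhat (X : gpair) (S : seq (pgrp X)) (alpha : nat) (U : seq (vert X)) : Prop :=
  [/\ (forall g h, List.In (inl g) U -> List.In (inl h) U -> (dS S g h <= alpha)%N),
      (forall A B, List.In (inr A) U -> List.In (inr B) U -> A = B)
    & (forall A g, List.In (inr A) U -> List.In (inl g) U ->
         exists a, cset A a /\ (dS S g a <= alpha)%N)].

Definition vmap (X Y : gpair) (f1 : pgrp X -> pgrp Y)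
  (f2 : coset_vertex X -> coset_vertex Y) (v : vert X) : vert Y :=
  match v with inl g => inl (f1 g) | inr A => inr (f2 A) end.

Section Simp.
Variables V W : Type.
Variables (K : seq V -> Prop) (K' : seq W -> Prop).

Definition simplicial (phi : V -> W) : Prop :=
  forall U, K U -> K' (map phi U).

Definition contiguous (phi psi : V -> W) : Prop :=
  forall U, K U -> K' (map phi U ++ map psi U).

(* equivalence relation generated by contiguity on simplicial maps K -> K' *)
Inductive simp_homotopic : (V -> W) -> (V -> W) -> Prop :=
| sh_refl phi : simplicial phi -> simp_homotopic phi phi
| sh_step phi psi chi : simplicial phi -> contiguous phi psi ->
    simp_homotopic psi chi -> simp_homotopic phi chi.
End Simp.

(** * Simplicial homology with Z coefficients (ordered chain complex) *)
Section Homology.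
Variable V : Type.

(* a chain is a formal Z-linear combination of ordered tuples of vertices *)
Definition chain := seq (int * seq V).

Definition coef (c : chain) (t : seq V) : int :=
  \sum_(p <- c) (if asbool (p.2 = t) then p.1 else 0).

Definition face (j : nat) (s : seq V) : seq V := take j s ++ drop j.+1 s.

Definition bdry (c : chain) : chain :=
  flatten [seq [seq ((-1) ^+ j * p.1, face j p.2) | j <- iota 0 (size p.2)] | p <- c].

Definition chain_in (K : seq V -> Prop) (i : nat) (c : chain) : Prop :=
  forall p, List.In p c -> size p.2 = i.+1 /\ K p.2.

(* i-cycles (the boundary map in degree 0 is zero) *)
Definition is_cycle (K : seq V -> Prop) (i : nat) (c : chain) : Prop :=
  chain_in K i c /\ ((0 < i)%N -> forall t, coef (bdry c) t = 0).

Definition is_boundary (K : seq V -> Prop) (i : nat) (c : chain) : Prop :=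
  exists d, chain_in K i.+1 d /\ forall t, coef (bdry d) t = coef c t.

(* (H_i(K_alpha;Z))_alpha, with maps induced by the inclusions K_alpha ⊆ K_beta,
   is essentially trivial: every H_i(K_a) maps to zero in some H_i(K_b), b >= a *)
Definition ess_trivial_H (K : nat -> seq V -> Prop) (i : nat) : Prop :=
  forall a, exists b, (a <= b)%N /\
    forall c, is_cycle (K a) i c -> is_boundary (K b) i c.
End Homology.

(* Main.v *)
Require Import Defs.
From mathcomp Require Import all_boot all_order all_algebra.
From mathcomp Require Import boolp reals.
From mathcomp Require Import lra zify.
From Stdlib Require List.
Import Order.TTheory GRing.Theory Num.Theory.
Local Open Scope ring_scope.

Section GroupFacts.
Variable G : group.

Lemma gmulVr (x : G) : gmul x (ginv x) = gone G.
Proof.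
transitivity (gmul (gmul (ginv (ginv x)) (ginv x)) (gmul x (ginv x))).
  by rewrite gmulV gmul1.
rewrite -gmulA (gmulA (ginv x) x) gmulV gmul1.
by rewrite gmulV.
Qed.

Lemma gmulr1 (x : G) : gmul x (gone G) = x.
Proof. by rewrite -(gmulV x) gmulA gmulVr gmul1. Qed.

Lemma gmulK (x y : G) : gmul (ginv x) (gmul x y) = y.
Proof. by rewrite gmulA gmulV gmul1. Qed.

Lemma ginvK (x : G) : ginv (ginv x) = x.
Proof.
transitivity (gmul (ginv (ginv x)) (gmul (ginv x) x)).
  by rewrite gmulV gmulr1.
by rewrite gmulK.
Qed.

Lemma ginvM (x y : G) : ginv (gmul x y) = gmul (ginv y) (ginv x).
Proof.
transitivity (gmul (ginv (gmul x y)) (gmul (gmul x y) (gmul (ginv y) (ginv x)))).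
  by rewrite -(gmulA x y) (gmulA y) gmulVr gmul1 gmulVr gmulr1.
by rewrite gmulK.
Qed.

End GroupFacts.


Section Word.
Variable G : group.
Variable S : seq G.

Lemma foldr_gcat (w1 w2 : seq G) :
  foldr (@gmul G) (gone G) (w1 ++ w2) =
  gmul (foldr (@gmul G) (gone G) w1) (foldr (@gmul G) (gone G) w2).
Proof. by elim: w1 => [|a w IH] /=; rewrite ?gmul1 // IH gmulA. Qed.

Fixpoint winv (w : seq G) : seq G :=
  match w with [::] => [::] | a :: w' => winv w' ++ [:: ginv a] end.

Lemma winv_size w : size (winv w) = size w.
Proof. by elim: w => //= a w IH; rewrite size_cat IH addn1. Qed.

Lemma winv_fold w : foldr (@gmul G) (gone G) (winv w) = ginv (foldr (@gmul G) (gone G) w).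
Proof.
elim: w => [|a w IH] /=.
  by rewrite -[ginv (gone G)]gmulr1 gmulV.
by rewrite foldr_gcat IH /= gmulr1 ginvM.
Qed.

Lemma winv_in w s : List.In s (winv w) -> exists a, List.In a w /\ s = ginv a.
Proof.
elim: w => [|a w IH] //= /List.in_app_iff [/IH [b [hb ->]]|[<-|//]].
  by exists b; split=> //; right.
by exists a; split=> //; left.
Qed.

Lemma wlen_inv n x : wlen_le S n x -> wlen_le S n (ginv x).
Proof.
case=> w [hs hin hf]; exists (winv w); split.
- by rewrite winv_size.
- move=> s /winv_in [a [ha ->]]; rewrite ginvK.
  by case: (hin a ha); [right|left].
- by rewrite winv_fold hf.
Qed.

Lemma wlen_cat n m x y : wlen_le S n x -> wlen_le S m y -> wlen_le S (n + m) (gmul x y).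
Proof.
case=> w1 [h1 i1 f1] [w2 [h2 i2 f2]]; exists (w1 ++ w2); split.
- by rewrite size_cat leq_add.
- by move=> s /List.in_app_iff [/i1|/i2].
- by rewrite foldr_gcat f1 f2.
Qed.

Lemma wordlen_min n x : wlen_le S n x -> (wordlen S x <= n)%N.
Proof.
move=> hn; rewrite /wordlen; case: pselect => [h|h].
  case: ex_minnP => m _ hm; apply: hm; exact/asboolP.
by exfalso; apply: h; exists n; apply/asboolP.
Qed.

Lemma wordlen_spec x : generates S -> wlen_le S (wordlen S x) x.
Proof.
move=> hS; rewrite /wordlen; case: pselect => [h|h].
  by case: ex_minnP => m /asboolP.
by exfalso; apply: h; have [n hn] := hS x; exists n; apply/asboolP.
Qed.

Lemma dS_tri x y z : generates S -> (dS S x z <= dS S x y + dS S y z)%N.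
Proof.
move=> hS; apply: wordlen_min.
have -> : gmul (ginv x) z = gmul (gmul (ginv x) y) (gmul (ginv y) z).
  by rewrite -gmulA (gmulA y) gmulVr gmul1.
by apply: wlen_cat; apply: wordlen_spec.
Qed.

Lemma dS_sym x y : generates S -> dS S x y = dS S y x.
Proof.
move=> hS.
have h : forall a b, (dS S a b <= dS S b a)%N.
  move=> a b; apply: wordlen_min.
  have -> : gmul (ginv a) b = ginv (gmul (ginv b) a) by rewrite ginvM ginvK.
  by apply: wlen_inv; apply: wordlen_spec.
by apply/eqP; rewrite eqn_leq !h.
Qed.

End Word.


Lemma LmulW {R : realType} {L : R} {x a : nat} : 1 <= L -> (x <= a)%N ->
  L * x%:R <= L * a%:R.
Proof.
move=> hL hx; apply: ler_wpM2l; first by apply: le_trans hL; exact: ler01.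
by rewrite ler_nat.
Qed.

Lemma part_i (R : realType) (X Y : gpair) (S : seq (pgrp X)) (T : seq (pgrp Y))
  (L C M : R) f1 f2 (hT : generates T) (hf : lip_pair S T L C M f1 f2)
  (alpha alpha' : nat) : L * alpha%:R + C + M <= alpha'%:R ->
  simplicial (Rhat S alpha) (Rhat T alpha') (vmap f1 f2).
Proof.
case: hf => hL hC hM hlip hhaus hα U [h1 h2 h3]; split.
- move=> g' h' /List.in_map_iff [[g|A] [eg hg]] // /List.in_map_iff [[h|B] [eh hh]] //.
  case: eg => <-; case: eh => <-.
  rewrite -(ler_nat R); apply: le_trans (hlip g h) _.
  have := LmulW hL (h1 g h hg hh); lra.
- move=> A' B' /List.in_map_iff [[g|A] [eA hA]] // /List.in_map_iff [[h|B] [eB hB]] //.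
  case: eA => <-; case: eB => <-; by rewrite (h2 A B hA hB).
- move=> A' g' /List.in_map_iff [[g|A] [eA hA]] // /List.in_map_iff [[h|B] [eB hB]] //.
  case: eA => <-; case: eB => <-.
  have [a [ha hda]] := h3 A h hA hB.
  have [e [he hfw _]] := hhaus A.
  have [y [hy hdy]] := hfw (f1 a) (ex_intro _ a (conj ha erefl)).
  exists y; split => //.
  have ht := dS_tri _ _ (f1 h) (f1 a) y hT.
  have ht' : (dS T (f1 h) y)%:R <= ((dS T (f1 h) (f1 a))%:R + (dS T (f1 a) y)%:R :> R).
    by rewrite -natrD ler_nat.
  rewrite -(ler_nat R).
  have := hlip h a; have := LmulW hL hda; lra.
Qed.


Lemma Rhat_sub (X : gpair) (S : seq (pgrp X)) a (U U' : seq (vert X)) :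
  (forall v, List.In v U' -> List.In v U) -> Rhat S a U -> Rhat S a U'.
Proof.
move=> hs [h1 h2 h3]; split.
- by move=> g h /hs hg /hs hh; apply: h1.
- by move=> A B /hs hA /hs hB; apply: h2.
- by move=> A g /hs hA /hs hg; apply: h3.
Qed.

Lemma Rhat_mono (X : gpair) (S : seq (pgrp X)) a b (U : seq (vert X)) :
  (a <= b)%N -> Rhat S a U -> Rhat S b U.
Proof.
move=> hab [h1 h2 h3]; split => //.
- by move=> g h hg hh; apply: leq_trans (h1 g h hg hh) hab.
- move=> A g hA hg; have [x [hx hd]] := h3 A g hA hg.
  by exists x; split => //; apply: leq_trans hd hab.
Qed.

Lemma mem_union {V : Type} {th : V -> V} {U : seq V} {v : V} :
  List.In v (map th U ++ map (fun v => v) U) ->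
  exists u, List.In u U /\ (v = th u \/ v = u).
Proof.
move/List.in_app_iff => [/List.in_map_iff [u [<- hu]]|/List.in_map_iff [u [<- hu]]].
  by exists u; split => //; left.
by exists u; split => //; right.
Qed.

Lemma real_facts (R : realType) (L C M : R) (al al' be be' : nat) :
  1 <= L -> 0 <= C -> 0 <= M ->
  L * al%:R + C + M <= al'%:R -> (al' <= be')%N ->
  L * be'%:R + 2 * C + M <= be%:R ->
  [/\ (al <= be)%N, al%:R + C <= be%:R & L * be'%:R + C <= be%:R].
Proof.
move=> hL hC hM h1 h2 h3.
have e1 : al%:R <= L * al%:R by apply: ler_peMl.
have e2 : be'%:R <= L * be'%:R by apply: ler_peMl.
have e3 : al'%:R <= be'%:R :> R by rewrite ler_nat.
have e4 : al%:R + C <= be%:R by lra.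
split => //; last by lra.
by rewrite -(ler_nat R); lra.
Qed.

Lemma contig (R : realType) (X Y : gpair) (S : seq (pgrp X)) (T : seq (pgrp Y))
  (L C M : R) f1 f2 r1 r2 (hS : generates S)
  (hq : quasi_retraction S T L C M f1 f2 r1 r2)
  (al al' be be' : nat) :
  L * al%:R + C + M <= al'%:R -> (al' <= be')%N ->
  L * be'%:R + 2 * C + M <= be%:R ->
  forall U, Rhat S al U ->
  Rhat S be (map (fun v => vmap r1 r2 (vmap f1 f2 v)) U ++ map (fun v => v) U).
Proof.
case: hq => [[hL hC hM hf _] [_ _ _ hr _] hrf hrf2] h1 h2 h3.
have [F1 F2 F3] := real_facts _ _ _ _ _ _ _ _ hL hC hM h1 h2 h3.
have key : forall g h, (dS S g h <= al)%N -> (dS S (r1 (f1 g)) h <= be)%N.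
  move=> g h hgh.
  have ht := dS_tri _ _ (r1 (f1 g)) g h hS.
  have ht' : (dS S (r1 (f1 g)) h)%:R <= ((dS S (r1 (f1 g)) g)%:R + (dS S g h)%:R :> R).
    by rewrite -natrD ler_nat.
  have := hrf g; have : (dS S g h)%:R <= al%:R :> R by rewrite ler_nat.
  rewrite -(ler_nat R); lra.
move=> U [u1 u2 u3]; split.
- move=> x y /mem_union [[g|A] [hg [ex|ex]]] // /mem_union [[h|B] [hh [ey|ey]]] //;
    case: ex => ->; case: ey => ->.
  + have hfg : (dS T (f1 g) (f1 h) <= be')%N.
      apply: leq_trans h2; rewrite -(ler_nat R); apply: le_trans (hf g h) _.
      have := LmulW hL (u1 g h hg hh); lra.
    rewrite -(ler_nat R); apply: le_trans (hr (f1 g) (f1 h)) _.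
    have := LmulW hL hfg; lra.
  + exact: key (u1 g h hg hh).
  + rewrite dS_sym //; exact: key (u1 h g hh hg).
  + exact: leq_trans (u1 g h hg hh) F1.
- move=> A' B' /mem_union [[g|A] [hA [ex|ex]]] // /mem_union [[h|B] [hB [ey|ey]]] //;
    case: ex => ->; case: ey => ->; rewrite ?hrf2; exact: u2.
- move=> A' x /mem_union [[g|A] [hA [ex|ex]]] // /mem_union [[h|B] [hB [ey|ey]]] //;
    case: ex => ->; case: ey => ->; rewrite ?hrf2;
    have [a [ha hda]] := u3 A h hA hB; exists a; split => //.
  + exact: key hda.
  + exact: leq_trans hda F1.
  + exact: key hda.
  + exact: leq_trans hda F1.
Qed.

Set Implicit Arguments. Unset Strict Implicit.


Section Hom.
Variable V : Type.
Implicit Types (c d : chain V) (g h : seq V -> int).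

Definition ev g c : int := \sum_(p <- c) p.1 * g p.2.
Definition Bd (s : seq V) : chain V :=
  [seq ((-1) ^+ j : int, face j s) | j <- iota 0 (size s)].
Definition db g (s : seq V) : int := ev g (Bd s).
Definition lin (F : seq V -> chain V) c : chain V :=
  flatten [seq [seq (q.1 * p.1, q.2) | q <- F p.2] | p <- c].
Definition npre (x : V) c : chain V := [seq (- q.1, x :: q.2) | q <- c].
Definition ind (t : seq V) (s : seq V) : int := if `[< s = t >] then 1 else 0.

Lemma ev_nil g : ev g [::] = 0. Proof. by rewrite /ev big_nil. Qed.
Lemma ev_cons g p c : ev g (p :: c) = p.1 * g p.2 + ev g c.
Proof. by rewrite /ev big_cons. Qed.
Lemma ev_cat g c d : ev g (c ++ d) = ev g c + ev g d.
Proof. by rewrite /ev big_cat. Qed.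
Lemma eq_ev g h c : (forall s, g s = h s) -> ev g c = ev h c.
Proof. by move=> e; apply: eq_bigr => p _; rewrite e. Qed.
Lemma ev_sub g h c : ev (fun s => g s - h s) c = ev g c - ev h c.
Proof. by rewrite /ev -sumrB; apply: eq_bigr => p _; rewrite mulrBr. Qed.
Lemma ev_in0 g c : (forall p, List.In p c -> g p.2 = 0) -> ev g c = 0.
Proof.
elim: c => [|p c IH] h; first by rewrite ev_nil.
by rewrite ev_cons h /= ?IH ?mulr0 ?add0r //; [move=> q hq; apply: h; right|left].
Qed.

Lemma coef_ev c t : coef c t = ev (ind t) c.
Proof.
rewrite /coef /ev; apply: eq_bigr => p _; rewrite /ind.
by case: asboolP => _; rewrite ?mulr1 ?mulr0.
Qed.

Lemma ev_bdry g c : ev g (bdry c) = ev (db g) c.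
Proof.
elim: c => [|p c IH]; first by rewrite /bdry /= !ev_nil.
have -> : bdry (p :: c) =
  [seq ((-1) ^+ j * p.1, face j p.2) | j <- iota 0 (size p.2)] ++ bdry c by [].
rewrite ev_cat IH ev_cons; congr (_ + _).
rewrite /ev /db /Bd big_map mulr_sumr big_map; apply: eq_bigr => j _ /=.
by rewrite mulrCA mulrA.
Qed.

Lemma ev_lin g F c : ev g (lin F c) = ev (fun s => ev g (F s)) c.
Proof.
elim: c => [|p c IH]; first by rewrite /lin /= !ev_nil.
have -> : lin F (p :: c) = [seq (q.1 * p.1, q.2) | q <- F p.2] ++ lin F c by [].
rewrite ev_cat IH ev_cons; congr (_ + _).
rewrite /ev big_map mulr_sumr; apply: eq_bigr => q _ /=.
by rewrite mulrCA mulrA.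
Qed.


Lemma ev_npre g x c : ev g (npre x c) = - ev (fun s => g (x :: s)) c.
Proof. by rewrite /ev big_map -sumrN; apply: eq_bigr => q _; rewrite mulNr. Qed.

Lemma Bd_cons x s : Bd (x :: s) = (1, s) :: npre x (Bd s).
Proof.
rewrite /Bd /npre /= (iotaDl 1 0) -!map_comp; congr (_ :: _).
  by rewrite /face /= drop0.
apply: eq_map => j /=; rewrite add1n exprS mulN1r; congr (_, _).
Qed.




Lemma db_cons g x s : db g (x :: s) = g s - db (fun u => g (x :: u)) s.
Proof. by rewrite /db Bd_cons ev_cons ev_npre mul1r. Qed.

End Hom.

Section Map.
Variables V W : Type.
Definition mapc (phi : V -> W) (c : chain V) : chain W := [seq (p.1, map phi p.2) | p <- c].
Lemma ev_mapc (g : seq W -> int) phi c : ev g (mapc phi c) = ev (fun s => g (map phi s)) c.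
Proof. by rewrite /ev big_map. Qed.
Lemma face_map (phi : V -> W) j s : face j (map phi s) = map phi (face j s).
Proof. by rewrite /face map_cat map_take map_drop. Qed.
Lemma Bd_map (phi : V -> W) s : Bd (map phi s) = mapc phi (Bd s).
Proof.
rewrite /Bd /mapc size_map -map_comp; apply: eq_map => j /=.
by rewrite face_map.
Qed.
Lemma db_map (g : seq W -> int) (phi : V -> W) s : db g (map phi s) = db (fun u => g (map phi u)) s.
Proof. by rewrite /db Bd_map ev_mapc. Qed.
End Map.

Section Prism.
Variable V : Type.
Implicit Types (c d : chain V) (g h : seq V -> int).
Variables (phi psi : V -> V).

Fixpoint prism (s : seq V) : chain V :=
  match s with
  | [::] => [::]
  | v :: s' => (1, phi v :: psi v :: map psi s') :: npre (phi v) (prism s')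
  end.

Lemma ev_prism_cons g v s :
  ev g (prism (v :: s)) = g (phi v :: psi v :: map psi s)
                          - ev (fun u => g (phi v :: u)) (prism s).
Proof. by rewrite /= ev_cons ev_npre mul1r. Qed.

Lemma prism_id s : forall g,
  ev (db g) (prism s) + ev (fun u => ev g (prism u)) (Bd s)
  = g (map psi s) - g (map phi s).
Proof.
elim: s => [|v s IH] g.
  by rewrite /= /Bd /= !ev_nil addr0 subrr.
have E2 : ev (fun u => db g (phi v :: u)) (prism s) =
   ev g (prism s) - ev (db (fun u => g (phi v :: u))) (prism s).
  by rewrite -ev_sub; apply: eq_ev => u; rewrite db_cons.
have E3 : db g (phi v :: psi v :: map psi s) = g (psi v :: map psi s)
   - (g (phi v :: map psi s) - db (fun u => g (phi v :: psi v :: u)) (map psi s)).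
  by rewrite !db_cons.
have E4 : ev (fun u => ev g (prism u)) (Bd (v :: s)) =
   ev g (prism s) - ev (fun u => ev g (prism (v :: u))) (Bd s).
  by rewrite Bd_cons ev_cons ev_npre mul1r.
have E5 : ev (fun u => ev g (prism (v :: u))) (Bd s) =
   db (fun u => g (phi v :: psi v :: u)) (map psi s)
   - ev (fun u => ev (fun w => g (phi v :: w)) (prism u)) (Bd s).
  rewrite db_map /db -ev_sub; apply: eq_ev => u; by rewrite ev_prism_cons.
have := IH (fun u => g (phi v :: u)).
rewrite ev_prism_cons E2 E3 E4 E5 /=.
move=> h; lia.
Qed.

Lemma ev_zero g : forall n c, (size c <= n)%N -> (forall t, coef c t = 0) -> ev g c = 0.
Proof.
elim=> [|n IH] [|p c] //= hs hc; rewrite ?ev_nil //.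
pose a := fun q : int * seq V => `[< q.2 = p.2 >].
rewrite /ev (bigID a) /=.
have -> : \sum_(i <- p :: c | true && a i) i.1 * g i.2 = 0.
  transitivity (\sum_(i <- p :: c | true && a i) i.1 * g p.2).
    by apply: eq_bigr => q /asboolP ->.
  rewrite -mulr_suml.
  have <- : coef (p :: c) p.2 = \sum_(i <- p :: c | true && a i) i.1.
    by rewrite /coef [RHS]big_mkcond.
  by rewrite hc mul0r.
rewrite add0r -big_filter.
have hp : a p by apply/asboolP.
apply: IH.
  by rewrite /= hp /= size_filter (leq_trans (count_size _ _)).
move=> t; rewrite /coef big_filter.
case: (asboolP (t = p.2)) => [->|ht].
  by rewrite big1 // => q /= /asboolP hq; case: asboolP.
have := hc t; rewrite /coef (bigID a) /=.
rewrite (@big1 _ _ _ _ _ (fun i => true && a i)) ?add0r //.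
by move=> q /= /asboolP hq; case: asboolP => // e; exfalso; apply: ht; rewrite -e hq.
Qed.

Lemma ev_wd g c d : (forall t, coef c t = coef d t) -> ev g c = ev g d.
Proof.
move=> h; pose nd := [seq (- q.1, q.2) | q <- d].
have hnd : forall k, ev k nd = - ev k d.
  by move=> k; rewrite /ev big_map -sumrN; apply: eq_bigr => q _; rewrite mulNr.
have hz := @ev_zero g _ (c ++ nd) (leqnn _).
rewrite ev_cat hnd in hz.
apply/eqP; rewrite -subr_eq0; apply/eqP; apply: hz => t.
rewrite !coef_ev ev_cat hnd -!coef_ev h; exact: subrr.
Qed.

End Prism.

Unset Implicit Arguments.

Arguments part_i {R X Y S T L C M f1 f2} hT hf {alpha alpha'}.
Arguments contig {R X Y S T L C M f1 f2 r1 r2} hS hq {al al' be be'}.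

Lemma In_mapc {V W : Type} {phi : V -> W} {c : chain V} {q} :
  List.In q (mapc phi c) -> exists p, List.In p c /\ q = (p.1, map phi p.2).
Proof. by move/List.in_map_iff => [p [<- hp]]; exists p. Qed.

Lemma In_lin {V : Type} {F : seq V -> chain V} {c : chain V} {q} :
  List.In q (lin F c) -> exists p, List.In p c /\ exists r, List.In r (F p.2) /\ q.2 = r.2.
Proof.
elim: c => [|p c IH] //= /List.in_app_iff [/List.in_map_iff [r [<- hr]]|/IH [p' [hp' h]]].
  by exists p; split; [left|exists r].
by exists p'; split; [right|].
Qed.

Lemma prism_prop {V : Type} {phi psi : V -> V} {s : seq V} {q} :
  List.In q (prism phi psi s) -> size q.2 = (size s).+1 /\
  forall v, List.In v q.2 -> List.In v (map phi s ++ map psi s).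
Proof.
elim: s q => [|v s IH] q //= [<-|/List.in_map_iff [r [<- hr]]] /=.
- split; first by rewrite size_map.
  move=> w [<-|[<-|hw]]; first by left.
    by right; apply/List.in_app_iff; right; left.
  by right; apply/List.in_app_iff; right; right.
- have [hs hv] := IH r hr; split; first by rewrite hs.
  move=> w [<-|/hv /List.in_app_iff [hw|hw]]; first by left.
    by right; apply/List.in_app_iff; left.
  by right; apply/List.in_app_iff; right; right.
Qed.

Lemma map_idfun {V : Type} (s : seq V) : map (fun v => v) s = s.
Proof. by elim: s => //= a s ->. Qed.

Lemma transfer (R : realType) (X Y : gpair)
  (S : seq (pgrp X)) (T : seq (pgrp Y))
  (hS : generates S) (hT : generates T)
  (L C M : R) f1 f2 r1 r2
  (hq : quasi_retraction S T L C M f1 f2 r1 r2) (i : nat) :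
  ess_trivial_H (Rhat T) i -> ess_trivial_H (Rhat S) i.
Proof.
move=> hess a.
have hq' := hq; case: hq' => [hf hr _ _].
have hf' := hf; case: hf' => hL hC hM _ _.
pose a' := (Num.trunc (L * a%:R + C + M)).+1.
have ha' : L * a%:R + C + M <= a'%:R by apply/ltW/truncnS_gt.
have [b' [hab' hb']] := hess a'.
pose be := (Num.trunc (L * b'%:R + 2 * C + M)).+1.
have hbe : L * b'%:R + 2 * C + M <= be%:R by apply/ltW/truncnS_gt.
have [F1 F2 F3] := real_facts _ _ _ _ _ _ _ _ hL hC hM ha' hab' hbe.
exists be; split => // c [hc_in hc_cyc].
pose phi := vmap f1 f2; pose rho := vmap r1 r2.
pose th := fun v => rho (phi v).
have fc_cyc : is_cycle (Rhat T a') i (mapc phi c).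
  split.
    move=> q /In_mapc [p [hp ->]] /=; have [hs hK] := hc_in p hp.
    by split; [rewrite size_map | exact: (part_i hT hf ha')].
  move=> hi t; rewrite coef_ev ev_bdry ev_mapc.
  have -> : ev (fun s => db (ind t) (map phi s)) c =
            ev (fun s => db (fun u => ind t (map phi u)) s) c.
    by apply: eq_ev => s; rewrite db_map.
  rewrite -ev_bdry; apply: ev_zero; [exact: leqnn | exact: hc_cyc].
have [d [hd_in hd_b]] := hb' _ fc_cyc.
exists (lin (prism th (fun v => v)) c ++ mapc rho d); split.
  move=> q /List.in_app_iff [/In_lin [p [hp [r [hrr ->]]]]|/In_mapc [p [hp ->]]].
    have [hs hK] := hc_in p hp.
    have [hrs hrv] := prism_prop hrr.
    split; first by rewrite hrs hs.
    apply: Rhat_sub hrv _.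
    exact: (contig hS hq ha' hab' hbe _ hK).
  have [hs hK] := hd_in p hp; split; first by rewrite size_map.
  apply: (part_i hS hr _ _ hK); lra.
move=> t; rewrite !coef_ev ev_bdry ev_cat ev_lin ev_mapc.
set g := ind t.
have E1 : ev (fun s => ev (db g) (prism th (fun v => v) s)) c =
   ev g c - ev (fun s => g (map th s)) c
   - ev (fun s => ev (fun u => ev g (prism th (fun v => v) u)) (Bd s)) c.
  rewrite -!ev_sub; apply: eq_ev => s.
  have := prism_id th (fun v => v) s g; rewrite map_idfun; lia.
have E2 : ev (fun s => ev (fun u => ev g (prism th (fun v => v) u)) (Bd s)) c = 0.
  have -> : ev (fun s => ev (fun u => ev g (prism th (fun v => v) u)) (Bd s)) c =
     ev (fun u => ev g (prism th (fun v => v) u)) (bdry c) by rewrite ev_bdry.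
  case: i hc_in hc_cyc hess hb' fc_cyc hd_in hd_b => [|i] hc_in hc_cyc _ _ _ _ _.
    rewrite ev_bdry; apply: ev_in0 => p hp.
    have [hs _] := hc_in p hp.
    case: p.2 hs => [|v [|w u]] //= _.
    by rewrite /db /Bd /= ev_cons ev_nil /= ev_nil mulr0 addr0.
  by apply: ev_zero; [exact: leqnn | exact: hc_cyc].
have E3 : ev (fun s => db g (map rho s)) d = ev (fun s => g (map th s)) c.
  have -> : ev (fun s => db g (map rho s)) d = ev (db (fun u => g (map rho u))) d.
    by apply: eq_ev => s; rewrite db_map.
  rewrite -ev_bdry (ev_wd _ hd_b) ev_mapc.
  by apply: eq_ev => s; rewrite -map_comp.
by rewrite E1 E2 E3 subr0 subrK.
Qed.

Theorem lemma4p2 (R : realType) (X Y : gpair)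
  (S : seq (pgrp X)) (T : seq (pgrp Y))
  (hS : generates S) (hT : generates T)
  (L C M : R)
  (f1 : pgrp X -> pgrp Y) (f2 : coset_vertex X -> coset_vertex Y)
  (hf : lip_pair S T L C M f1 f2) :
  (* (i) *)
  (forall alpha alpha' : nat, L * alpha%:R + C + M <= alpha'%:R ->
     simplicial (Rhat S alpha) (Rhat T alpha') (vmap f1 f2)) /\
  (* (ii) *)
  (forall (r1 : pgrp Y -> pgrp X) (r2 : coset_vertex Y -> coset_vertex X),
     lip_pair T S L C M r1 r2 ->
     quasi_retraction S T L C M f1 f2 r1 r2 ->
     (forall alpha alpha' beta beta' : nat,
        L * alpha%:R + C + M <= alpha'%:R ->
        (alpha' <= beta')%N ->
        L * beta'%:R + 2 * C + M <= beta%:R ->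
        simp_homotopic (Rhat S alpha) (Rhat S beta)
          (fun v => vmap r1 r2 (vmap f1 f2 v)) (fun v => v)) /\
     (forall i : nat, ess_trivial_H (Rhat T) i -> ess_trivial_H (Rhat S) i)).
Proof.
have hf' := hf; case: hf' => hL hC hM _ _.
split.
  by move=> al al' h; apply: (part_i hT hf h).
move=> r1 r2 hr hq; split.
  move=> al al' be be' h1 h2 h3.
  have [F1 _ _] := real_facts _ _ _ _ _ _ _ _ hL hC hM h1 h2 h3.
  apply: (@sh_step _ _ _ _ _ (fun v => v)).
  - move=> U hU; apply: Rhat_sub (contig hS hq h1 h2 h3 U hU).
    by move=> v hv; apply/List.in_app_iff; left.
  - exact: (contig hS hq h1 h2 h3).
  - apply: sh_refl => U hU; rewrite map_idfun; exact: Rhat_mono F1 hU.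
by move=> i; exact: (transfer _ _ _ _ _ hS hT _ _ _ _ _ _ _ hq i).
Qed.
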